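(* $\mathcal{C}_2(10,5,3)\le 45230$.
   Context: $\mathcal{C}_q(n,k,r)$ is the minimum number of $k$-dimensional subspaces of $\mathbb{F}_q^n$ such that every $r$-dimensional subspace of $\mathbb{F}_q^n$ is contained in at least one of them. *)

(* Defs.v *)
From HB Require Import structures.
From mathcomp Require Import all_boot all_order all_algebra.
Set Implicit Arguments. Unset Strict Implicit. Unset Printing Implicit Defensive.
Import GRing.Theory.
Local Open Scope ring_scope.

Definition is_subspace_covering (F : fieldType) (n k r : nat)
    (S : seq {vspace 'rV[F]_n}) : Prop :=
  (forall U, U \in S -> \dim U = k) /\
  (forall W : {vspace 'rV[F]_n}, \dim W = r -> exists2 U, U \in S & (W <= U)%VS).

Definition covering_number_le (F : fieldType) (n k r N : nat) : Prop :=
  exists S : seq {vspace 'rV[F]_n}, is_subspace_covering k r S /\ (size S <= N)%N.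

(* Main.v *)
From HB Require Import structures.
Require Import Defs.
From mathcomp Require Import all_boot all_order all_algebra.
Set Implicit Arguments. Unset Strict Implicit. Unset Printing Implicit Defensive.

Inductive h5 := H5 of bool & bool & bool & bool & bool.
Definition h5eqb (a b : h5) :=
  let: H5 a0 a1 a2 a3 a4 := a in let: H5 b0 b1 b2 b3 b4 := b in
  [&& eqb a0 b0, eqb a1 b1, eqb a2 b2, eqb a3 b3 & eqb a4 b4].
Lemma h5eqP : Equality.axiom h5eqb.
Proof.
move=> [a0 a1 a2 a3 a4] [b0 b1 b2 b3 b4] /=; rewrite !eqbE.
apply: (iffP idP) => [/and5P[/eqP-> /eqP-> /eqP-> /eqP-> /eqP->]//|[-> -> -> -> ->]].
by rewrite !eqxx.
Qed.
HB.instance Definition _ := hasDecEq.Build h5 h5eqP.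

Definition code := (h5 * h5)%type.
Definition z5 := H5 false false false false false.
Definition one5 := H5 true false false false false.
Definition xor5 (a b : h5) :=
  let: H5 a0 a1 a2 a3 a4 := a in let: H5 b0 b1 b2 b3 b4 := b in
  H5 (xorb a0 b0) (xorb a1 b1) (xorb a2 b2) (xorb a3 b3) (xorb a4 b4).
Definition m5 (a : h5) := let: H5 b0 b1 b2 b3 b4 := a in H5 b4 b0 (xorb b1 b4) b2 b3.
Definition sc (b : bool) (z : h5) := if b then z else z5.
Definition mul5 (a x : h5) :=
  let: H5 b0 b1 b2 b3 b4 := x in
  xor5 (sc b0 a) (xor5 (sc b1 (m5 a)) (xor5 (sc b2 (m5 (m5 a)))
    (xor5 (sc b3 (m5 (m5 (m5 a)))) (sc b4 (m5 (m5 (m5 (m5 a)))))))).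
Definition pw k := iter k m5 one5.
Definition allh5 := [:: (H5 false false false false false); (H5 true false false false false); (H5 false true false false false); (H5 true true false false false); (H5 false false true false false); (H5 true false true false false); (H5 false true true false false); (H5 true true true false false); (H5 false false false true false); (H5 true false false true false); (H5 false true false true false); (H5 true true false true false); (H5 false false true true false); (H5 true false true true false); (H5 false true true true false); (H5 true true true true false); (H5 false false false false true); (H5 true false false false true); (H5 false true false false true); (H5 true true false false true); (H5 false false true false true); (H5 true false true false true); (H5 false true true false true); (H5 true true true false true); (H5 false false false true true); (H5 true false false true true); (H5 false true false true true); (H5 true true false true true); (H5 false false true true true); (H5 true false true true true); (H5 false true true true true); (H5 true true true true true)].
Definition xorc (c d : code) : code := (xor5 c.1 d.1, xor5 c.2 d.2).
Definition zc : code := (z5, z5).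
Fixpoint spanc (s : seq code) : seq code :=
  if s is a :: s' then let t := spanc s' in t ++ map (xorc a) t else [:: zc].
Fixpoint span5 (s : seq h5) : seq h5 :=
  if s is a :: s' then let t := span5 s' in t ++ map (xor5 a) t else [:: z5].

Definition repdata : seq (h5 * h5) := [:: ((H5 true true false false false), (H5 true false true true true)); ((H5 false false false true false), (H5 false false false false true)); ((H5 true false true false false), (H5 true true false true false)); ((H5 false true true false false), (H5 true true false false true)); ((H5 true true false false false), (H5 false false true false true))].
Definition pldata : seq (seq (h5 * h5 * h5 * h5 * h5)) := [::
  [:: ((H5 true false true false false), (H5 false true false true false), (H5 false false false false true), (H5 true false false false false), (H5 false true false false false)); ((H5 false true true false false), (H5 false true false true false), (H5 false true false false true), (H5 true false false false false), (H5 false true false false false)); ((H5 true false false false false), (H5 false true false true false), (H5 false true true false true), (H5 false true false false false), (H5 false false true false false)); ((H5 false true false false false), (H5 false false false true false), (H5 true false false false true), (H5 true false false false false), (H5 false false true false false)); ((H5 true true false false false), (H5 false false true false false), (H5 true false false true false), (H5 true false false false false), (H5 false false false false true))];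
  [:: ((H5 false true false false false), (H5 false false true false false), (H5 false false false false true), (H5 true false false false false), (H5 false false false true false)); ((H5 true false false false false), (H5 false false false true false), (H5 false true true false true), (H5 false true false false false), (H5 false false true false false)); ((H5 true false true false false), (H5 true true false true false), (H5 true true false false true), (H5 true false false false false), (H5 false true false false false)); ((H5 true true false false false), (H5 false false true true false), (H5 true false true false true), (H5 true false false false false), (H5 false false true false false)); ((H5 true true true false false), (H5 false true false true false), (H5 true false false false true), (H5 true false false false false), (H5 false true false false false))];
  [:: ((H5 true false false false false), (H5 false true true true false), (H5 false true false false true), (H5 false true false false false), (H5 false false true false false)); ((H5 true false true false false), (H5 false false false true false), (H5 false false false false true), (H5 true false false false false), (H5 false true false false false)); ((H5 true true true false false), (H5 true true false true false), (H5 true false false false true), (H5 true false false false false), (H5 false true false false false)); ((H5 false true false false false), (H5 false false true false false), (H5 true false false true true), (H5 true false false false false), (H5 false false false true false)); ((H5 true true false false false), (H5 true false false true false), (H5 false false true false true), (H5 true false false false false), (H5 false false true false false))];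
  [:: ((H5 false true false false false), (H5 false false false true false), (H5 false false true false true), (H5 true false false false false), (H5 false false true false false)); ((H5 false true true false false), (H5 true true false true false), (H5 false true false false true), (H5 true false false false false), (H5 false true false false false)); ((H5 true true false false false), (H5 false false true true false), (H5 false false true false true), (H5 true false false false false), (H5 false false true false false)); ((H5 true true true false false), (H5 true false false true false), (H5 true true false false true), (H5 true false false false false), (H5 false true false false false)); ((H5 true false false false false), (H5 false false true false false), (H5 false false false false true), (H5 false true false false false), (H5 false false false true false))];
  [:: ((H5 false true true false false), (H5 true true false true false), (H5 false true false false true), (H5 true false false false false), (H5 false true false false false)); ((H5 true false false false false), (H5 false false false true false), (H5 false true false false true), (H5 false true false false false), (H5 false false true false false)); ((H5 false false true false false), (H5 false true false true false), (H5 false true false false true), (H5 true false false false false), (H5 false true false false false)); ((H5 false true false false false), (H5 true false true false false), (H5 false false false false true), (H5 true false false false false), (H5 false false false true false)); ((H5 true true false false false), (H5 false false true true false), (H5 true false false false true), (H5 true false false false false), (H5 false false true false false))]].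

Inductive idx := IM of h5 & h5 & h5 | IF of nat & nat & nat & nat & nat | IY.

Definition basisX := [:: (H5 true false false false false); (H5 false true false false false); (H5 false false true false false); (H5 false false false true false); (H5 false false false false true)].
Definition comb2 (r1 r2 : h5) (h : nat) := xor5 (sc (odd h) r1) (sc (odd h./2) r2).
Definition gfun (a b c x : h5) :=
  let x2 := mul5 x x in xor5 (mul5 a x) (xor5 (mul5 b x2) (mul5 c (mul5 x2 x2))).
Definition mk (i : idx) : seq code :=
  match i with
  | IM a b c => [seq (x, gfun a b c x) | x <- basisX]
  | IF j k pl hp hq =>
      let: (p, q) := nth (z5,z5) repdata j in
      let: (b1, b2, b3, r1, r2) := nth (z5,z5,z5,z5,z5) (nth [::] pldata j) pl in
      let s := pw k in
      let r1' := mul5 s r1 in let r2' := mul5 s r2 in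
      [:: (mul5 s p, comb2 r1' r2' hp); (mul5 s q, comb2 r1' r2' hq);
          (z5, mul5 s b1); (z5, mul5 s b2); (z5, mul5 s b3)]
  | IY => [seq (z5, x) | x <- basisX]
  end.

Definition valid (i : idx) :=
  match i with IF j k pl hp hq => [&& j < 5, k < 31, pl < 5, hp < 4 & hq < 4] | _ => true end.
Definition forallI (P : idx -> bool) :=
  [&& all (fun a => all (fun b => all (fun c => P (IM a b c)) allh5) allh5) allh5,
      all (fun j => all (fun k => all (fun pl => all (fun hp => all (fun hq => P (IF j k pl hp hq))
         (iota 0 4)) (iota 0 4)) (iota 0 5)) (iota 0 31)) (iota 0 5) & P IY].
Definition filterI (P : idx -> bool) : seq idx :=
  flatten [seq flatten [seq [seq IM a b c | c <- allh5 & P (IM a b c)] | b <- allh5] | a <- allh5] ++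
  flatten [seq flatten [seq flatten [seq flatten [seq [seq IF j k pl hp hq | hq <- iota 0 4 & P (IF j k pl hp hq)]
     | hp <- iota 0 4] | pl <- iota 0 5] | k <- iota 0 31] | j <- iota 0 5] ++
  (if P IY then [:: IY] else [::]).

Definition codeeq (c d : code) := h5eqb c.1 d.1 && h5eqb c.2 d.2.
Fixpoint memc (x : code) (s : seq code) := if s is y :: s' then (if codeeq x y then true else memc x s') else false.
Definition incl (l l' : seq code) :=
  let sp := spanc l' in all (fun b => if memc b l' then true else memc b sp) l.

Definition Dc (c : code) : code := (m5 c.1, m5 c.2).
Definition fD (i : idx) :=
  match i with
  | IM a b c => IM a (iter 30 m5 b) (iter 28 m5 c)
  | IF j k pl hp hq => IF j (k.+1 %% 31) pl hp hq
  | IY => IY end.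
Definition chkD := forallI (fun i => valid (fD i) && incl (map Dc (mk i)) (mk (fD i))).



Inductive tr := Leaf of bool | Node of tr & tr.
Fixpoint lookup (t : tr) (p : seq bool) : bool :=
  match t, p with
  | Leaf b, _ => b
  | Node l r, b :: p' => lookup (if b then r else l) p'
  | Node _ _, [::] => true
  end.
Fixpoint insert (p : seq bool) (t : tr) : tr :=
  match p, t with
  | [::], _ => Leaf true
  | b :: p', Leaf true => Leaf true
  | b :: p', Leaf false => if b then Node (Leaf false) (insert p' (Leaf false)) else Node (insert p' (Leaf false)) (Leaf false)
  | b :: p', Node l r => if b then Node l (insert p' r) else Node (insert p' l) r
  end.
Fixpoint tor (t1 t2 : tr) : tr :=
  match t1, t2 with
  | Leaf true, _ => Leaf true
  | Leaf false, _ => t2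
  | _, Leaf true => Leaf true
  | _, Leaf false => t1
  | Node a b, Node c d => Node (tor a c) (tor b d)
  end.
Fixpoint full (t : tr) : bool := match t with Leaf b => b | Node l r => full l && full r end.
Definition bits5 (a : h5) := let: H5 a0 a1 a2 a3 a4 := a in [:: a0; a1; a2; a3; a4].
Definition bits (c : code) := bits5 c.1 ++ bits5 c.2.
Definition mask (s : seq code) := foldr (fun c t => insert (bits c) t) (Leaf false) s.
Definition allcodes : seq code := flatten [seq [seq (x, y) | y <- allh5] | x <- allh5].
Definition e0 : code := (one5, z5).
Definition chkCov :=
  let SEm := [seq mask (spanc (mk i)) | i <- filterI (fun i => memc e0 (spanc (mk i)))] in
  all (fun x => full (foldr tor (Leaf false) [seq t <- SEm | lookup t (bits x)])) allcodes.

Fixpoint mem5 (x : h5) (s : seq h5) := if s is y :: s' then (if h5eqb x y then true else mem5 x s') else false.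
Definition shs (s : h5) (c : code) : code := (c.1, xor5 c.2 (mul5 s c.1)).
Definition fS (s : h5) (i : idx) :=
  match i with
  | IM a b c => IM (xor5 a s) b c
  | IF j k pl hp hq =>
      let: (p, q) := nth (z5,z5) repdata j in
      let: (b1, b2, b3, r1, r2) := nth (z5,z5,z5,z5,z5) (nth [::] pldata j) pl in
      let w := pw k in
      let r1' := mul5 w r1 in let r2' := mul5 w r2 in
      let B := span5 [:: mul5 w b1; mul5 w b2; mul5 w b3] in
      let fix_ h x := let y := xor5 (comb2 r1' r2' h) (mul5 s (mul5 w x)) in
          find (fun h' => mem5 (xor5 y (comb2 r1' r2' h')) B) (iota 0 4) in
      IF j k pl (fix_ hp p) (fix_ hq q)
  | IY => IY end.
Definition chkS := all (fun s => forallI (fun i => valid (fS s i) && incl (map (shs s) (mk i)) (mk (fS s i)))) basisX.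

Definition idxeqb (i j : idx) :=
  match i, j with
  | IM a b c, IM a' b' c' => [&& a == a', b == b' & c == c']
  | IF j k pl hp hq, IF j' k' pl' hp' hq' => [&& j == j', k == k', pl == pl', hp == hp' & hq == hq']
  | IY, IY => true
  | _, _ => false
  end.
Lemma idxeqP : Equality.axiom idxeqb.
Proof.
case=> [a b c|j k pl hp hq|] [a' b' c'|j' k' pl' hp' hq'|] /=; try by constructor.
- by apply: (iffP and3P) => [[/eqP-> /eqP-> /eqP->]|[-> -> ->]] //; rewrite !eqxx.
- by apply: (iffP and5P) => [[/eqP-> /eqP-> /eqP-> /eqP-> /eqP->]|[-> -> -> -> ->]] //; rewrite !eqxx.
Qed.
HB.instance Definition _ := hasDecEq.Build idx idxeqP.

Lemma mem_allh5 a : a \in allh5.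
Proof. by case: a => [[] [] [] [] []]; vm_compute. Qed.

Lemma h5eqbE a b : h5eqb a b = (a == b). Proof. by []. Qed.
Lemma codeeqE c d : codeeq c d = (c == d). Proof. by case: c d => [? ?] [? ?]. Qed.
Lemma memcE x s : memc x s = (x \in s).
Proof. elim: s => [//|y s IH] /=; rewrite in_cons -IH codeeqE; by case: (x == y). Qed.
Lemma mem5E x s : mem5 x s = (x \in s).
Proof. elim: s => [//|y s IH] /=; rewrite in_cons -IH h5eqbE; by case: (x == y). Qed.

Lemma all2P (P : h5 -> h5 -> bool) :
  all (fun a => all (fun b => P a b) allh5) allh5 -> forall a b, P a b.
Proof. by move=> /allP H a b; move: (H a (mem_allh5 a)) => /allP /(_ b (mem_allh5 b)). Qed.
Lemma all3P (P : h5 -> h5 -> h5 -> bool) :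
  all (fun a => all (fun b => all (fun c => P a b c) allh5) allh5) allh5 -> forall a b c, P a b c.
Proof.
move=> /allP H a b c; move: (H a (mem_allh5 a)) => /allP /(_ b (mem_allh5 b)).
by move=> /allP /(_ c (mem_allh5 c)).
Qed.

Lemma x5A a b c : xor5 a (xor5 b c) = xor5 (xor5 a b) c.
Proof.
have H := @all3P (fun a b c => h5eqb (xor5 a (xor5 b c)) (xor5 (xor5 a b) c)).
by apply/eqP; apply: H; vm_compute.
Qed.
Lemma x5C a b : xor5 a b = xor5 b a.
Proof.
have H := @all2P (fun a b => h5eqb (xor5 a b) (xor5 b a)).
by apply/eqP; apply: H; vm_compute.
Qed.
Lemma x5K a : xor5 a a = z5. Proof. by case: a => [[] [] [] [] []]. Qed.
Lemma x50 a : xor5 z5 a = a. Proof. by case: a => [[] [] [] [] []]. Qed.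
Lemma x5ACA a b c d : xor5 (xor5 a b) (xor5 c d) = xor5 (xor5 a c) (xor5 b d).
Proof. by rewrite -!x5A (x5A b c d) (x5C b c) -x5A. Qed.
Lemma m5lin a b : m5 (xor5 a b) = xor5 (m5 a) (m5 b).
Proof.
have H := @all2P (fun a b => h5eqb (m5 (xor5 a b)) (xor5 (m5 a) (m5 b))).
by apply/eqP; apply: H; vm_compute.
Qed.
Lemma mullin s a b : mul5 s (xor5 a b) = xor5 (mul5 s a) (mul5 s b).
Proof.
have H := @all3P (fun s a b => h5eqb (mul5 s (xor5 a b)) (xor5 (mul5 s a) (mul5 s b))).
by apply/eqP; apply: H; vm_compute.
Qed.
Lemma mul0 s : mul5 s z5 = z5.
Proof. by case: s => [[] [] [] [] []]. Qed.

Lemma xcA a b c : xorc a (xorc b c) = xorc (xorc a b) c.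
Proof. by rewrite /xorc /= !x5A. Qed.
Lemma xcC a b : xorc a b = xorc b a.
Proof. by rewrite /xorc x5C (x5C a.2). Qed.
Lemma xcK a : xorc a a = zc. Proof. by rewrite /xorc !x5K. Qed.
Lemma xc0 a : xorc zc a = a. Proof. by case: a => ? ?; rewrite /xorc !x50. Qed.

Lemma zc_span s : zc \in spanc s.
Proof. by elim: s => [|a s IH] /=; rewrite ?mem_head // mem_cat IH. Qed.

Lemma span_self s b : b \in s -> b \in spanc s.
Proof.
elim: s => [//|a s IH]; rewrite in_cons => /orP[/eqP->|bs] /=; rewrite mem_cat.
  by apply/orP; right; apply/mapP; exists zc; [exact: zc_span | rewrite xcC xc0].
by rewrite IH.
Qed.

Lemma span_xor s a b : a \in spanc s -> b \in spanc s -> xorc a b \in spanc s.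
Proof.
elim: s a b => [|x s IH] a b /=.
  by rewrite !inE => /eqP-> /eqP->; rewrite xcK.
rewrite !mem_cat => /orP[Ha|/mapP[a' Ha' ->]] /orP[Hb|/mapP[b' Hb' ->]].
- by rewrite IH.
- apply/orP; right; apply/mapP; exists (xorc a b'); first exact: IH.
  by rewrite xcA (xcC a x) xcA.
- apply/orP; right; apply/mapP; exists (xorc a' b); first exact: IH.
  by rewrite xcA.
- apply/orP; left; rewrite -xcA (xcA a') (xcC a' x) -xcA xcA xcK xc0.
  exact: IH.
Qed.

Lemma span_sub l l' : {subset l <= spanc l'} -> {subset spanc l <= spanc l'}.
Proof.
elim: l => [|a l IH] H c /=.
  by rewrite inE => /eqP->; apply: zc_span.
have H' : {subset l <= spanc l'} by move=> y yl; apply: H; rewrite in_cons yl orbT.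
rewrite mem_cat => /orP[/IH|/mapP[d Hd ->]]; first exact.
apply: span_xor; first by apply: H; rewrite mem_head.
exact: IH.
Qed.

Lemma span_lin (g : code -> code) l c :
  (forall c d, g (xorc c d) = xorc (g c) (g d)) -> g zc = zc ->
  c \in spanc l -> g c \in spanc (map g l).
Proof.
move=> gl g0; elim: l c => [|a l IH] c /=.
  by rewrite inE => /eqP->; rewrite g0 mem_head.
rewrite !mem_cat => /orP[/IH->//|/mapP[d Hd ->]].
by rewrite gl; apply/orP; right; apply: map_f; apply: IH.
Qed.

Lemma incl_sub l l' : incl l l' -> {subset l <= spanc l'}.
Proof.
move=> /allP H b bl; move: (H b bl); rewrite !memcE.
by case: ifP => [bl' _|_ //]; apply: span_self.
Qed.

Lemma forallIP P : forallI P -> forall i, valid i -> P i.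
Proof.
case/and3P=> HM HF HY [a b c|j k pl hp hq|] //= V.
- move: HM => /all3P; apply.
- case/and5P: V => Hj Hk Hpl Hhp Hhq.
  have mi : forall m n, m < n -> m \in iota 0 n by move=> m n H; rewrite mem_iota.
  move/allP: HF => /(_ j (mi _ _ Hj)) /allP /(_ k (mi _ _ Hk)) /allP /(_ pl (mi _ _ Hpl)).
  by move=> /allP /(_ hp (mi _ _ Hhp)) /allP /(_ hq (mi _ _ Hhq)).
Qed.

Lemma filterIP P i : i \in filterI P -> valid i && P i.
Proof.
rewrite /filterI mem_cat => /orP[|]; last rewrite mem_cat => /orP[|].
- move=> /flattenP[s1 /mapP[a _ ->] /flattenP[s2 /mapP[b _ ->]]].
  by move=> /mapP[c]; rewrite mem_filter => /andP[Pc _] ->.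
- move=> /flattenP[s1 /mapP[j Hj ->] /flattenP[s2 /mapP[k Hk ->]]].
  move=> /flattenP[s3 /mapP[pl Hpl ->] /flattenP[s4 /mapP[hp Hhp ->]]].
  move=> /mapP[hq]; rewrite mem_filter => /andP[Pc Hhq] ->.
  rewrite !mem_iota !add0n in Hj Hk Hpl Hhp Hhq.
  by rewrite /= Pc; case/andP: Hj => _ ->; case/andP: Hk => _ ->; case/andP: Hpl => _ ->;
     case/andP: Hhp => _ ->; case/andP: Hhq => _ ->.
- by case: ifP => // PY; rewrite inE => /eqP->; rewrite PY.
Qed.

Definition Pinv (g : code -> code) := forall i, valid i ->
  exists2 i', valid i' & forall c, c \in spanc (mk i) -> g c \in spanc (mk i').

Lemma Pinv_id : Pinv id.
Proof. by move=> i Vi; exists i. Qed.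
Lemma Pinv_comp g h : Pinv g -> Pinv h -> Pinv (fun c => g (h c)).
Proof.
move=> Pg Ph i Vi; have [i1 V1 H1] := Ph i Vi; have [i2 V2 H2] := Pg i1 V1.
by exists i2 => // c Hc; apply/H2/H1.
Qed.
Lemma Pinv_iter n g : Pinv g -> Pinv (iter n g).
Proof.
move=> Pg; elim: n => [|n IH]; first exact: Pinv_id.
exact: (Pinv_comp Pg IH).
Qed.
Lemma Pinv_ext g h : (forall c, g c = h c) -> Pinv g -> Pinv h.
Proof. by move=> E Pg i Vi; have [i' V' H] := Pg i Vi; exists i' => // c Hc; rewrite -E; apply: H. Qed.

Lemma Pinv_chk (g : code -> code) (f : idx -> idx) :
  (forall c d, g (xorc c d) = xorc (g c) (g d)) -> g zc = zc ->
  forallI (fun i => valid (f i) && incl (map g (mk i)) (mk (f i))) -> Pinv g.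
Proof.
move=> gl g0 /forallIP H i Vi; case/andP: (H i Vi) => Vf Hincl.
exists (f i) => // c Hc; apply: (span_sub (incl_sub Hincl)).
exact: span_lin.
Qed.

Lemma chkD_ok : forallI (fun i => valid (fD i) && incl (map Dc (mk i)) (mk (fD i))).
Proof. by vm_compute. Qed.
Lemma chkS_ok : all (fun s => forallI (fun i => if i is IM _ _ _ then true else
   valid (fS s i) && incl (map (shs s) (mk i)) (mk (fS s i)))) basisX.
Proof. by vm_compute. Qed.

Lemma Dc_lin c d : Dc (xorc c d) = xorc (Dc c) (Dc d).
Proof. by rewrite /Dc /xorc /= !m5lin. Qed.
Lemma Pinv_D : Pinv Dc.
Proof. by apply: (Pinv_chk (f := fD)); [exact: Dc_lin | by [] | exact: chkD_ok]. Qed.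

Lemma shs_lin s c d : shs s (xorc c d) = xorc (shs s c) (shs s d).
Proof. by rewrite /shs /xorc /= mullin x5ACA. Qed.
Lemma shs0 s : shs s zc = zc.
Proof. by rewrite /shs mul0 x5C x50. Qed.
Lemma mullin1 a b x : mul5 (xor5 a b) x = xor5 (mul5 a x) (mul5 b x).
Proof.
have H := @all3P (fun a b x => h5eqb (mul5 (xor5 a b) x) (xor5 (mul5 a x) (mul5 b x))).
by apply/eqP; apply: H; vm_compute.
Qed.

Lemma mk_shift a b c s : map (shs s) (mk (IM a b c)) = mk (IM (xor5 a s) b c).
Proof.
rewrite /mk -map_comp; apply: eq_map => x /=.
rewrite /shs /gfun; congr pair; rewrite /= mullin1 -!x5A; congr xor5; by rewrite [RHS]x5C x5A.
Qed.

Lemma Pinv_shs_basis s : s \in basisX -> Pinv (shs s).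
Proof.
move=> sB i Vi; move/allP: chkS_ok => /(_ s sB) /forallIP /(_ i Vi).
case: i Vi => [a b c|j k pl hp hq|] Vi.
- move=> _; exists (IM (xor5 a s) b c) => // d Hd; rewrite -mk_shift.
  by apply: span_lin; [exact: shs_lin | exact: shs0 | exact: Hd].
- move=> /andP[Vf Hincl]; exists (fS s (IF j k pl hp hq)) => // d Hd.
  apply: (span_sub (incl_sub Hincl)).
  by apply: span_lin; [exact: shs_lin | exact: shs0 | exact: Hd].
- move=> /andP[Vf Hincl]; exists (fS s IY) => // d Hd.
  apply: (span_sub (incl_sub Hincl)).
  by apply: span_lin; [exact: shs_lin | exact: shs0 | exact: Hd].
Qed.

Definition iterb (b : bool) (f : code -> code) (c : code) := if b then f c else c.
Definition e_0 := nth z5 basisX 0. Definition e_1 := nth z5 basisX 1.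
Definition e_2 := nth z5 basisX 2. Definition e_3 := nth z5 basisX 3.
Definition e_4 := nth z5 basisX 4.
Definition shcomp (a : h5) (c : code) :=
  let: H5 a0 a1 a2 a3 a4 := a in
  iterb a0 (shs e_0) (iterb a1 (shs e_1) (iterb a2 (shs e_2) (iterb a3 (shs e_3) (iterb a4 (shs e_4) c)))).
Lemma allcodesP_ok : all (fun a => all (fun c => codeeq (shs a c) (shcomp a c)) allcodes) allh5.
Proof. by vm_compute. Qed.

Lemma mem_allcodes c : c \in allcodes.
Proof.
case: c => a b; apply/flattenP; exists [seq (a, y) | y <- allh5].
  by apply/mapP; exists a => //; apply: mem_allh5.
by apply/mapP; exists b => //; apply: mem_allh5.
Qed.

Lemma Pinv_iterb b f : Pinv f -> Pinv (iterb b f).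
Proof. by case: b => Pf; [exact: Pf | exact: Pinv_id]. Qed.

Lemma Pinv_shs a : Pinv (shs a).
Proof.
have E : forall c, shcomp a c = shs a c.
  move=> c; move/allP: allcodesP_ok => /(_ a (mem_allh5 a)) /allP /(_ c (mem_allcodes c)).
  by rewrite codeeqE => /eqP.
apply: (Pinv_ext E); case: a {E} => a0 a1 a2 a3 a4 /=.
have PB : forall s, s \in basisX -> forall b, Pinv (iterb b (shs s)).
  by move=> s sB b; apply: Pinv_iterb; apply: Pinv_shs_basis.
repeat apply: Pinv_comp; apply: PB; by rewrite /e_0 /e_1 /e_2 /e_3 /e_4 /basisX /= !inE eqxx ?orbT.
Qed.

Lemma lookup_tor t1 t2 q : lookup (tor t1 t2) q = lookup t1 q || lookup t2 q.
Proof.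
elim: t1 t2 q => [[]|a IHa b IHb] [[]|c d] [|x q] //=; rewrite ?orbT ?orbF //.
by case: x; [apply: IHb | apply: IHa].
Qed.
Lemma lookup_full t q : full t -> lookup t q.
Proof.
elim: t q => [b|l IHl r IHr] [|x q] //= /andP[Fl Fr].
by case: x; [apply: IHr | apply: IHl].
Qed.
Lemma lookup_foldr ts q : lookup (foldr tor (Leaf false) ts) q = has (fun t => lookup t q) ts.
Proof. by elim: ts => [//|t ts IH] /=; rewrite lookup_tor IH. Qed.
Lemma lookup_insert p t q : size p = size q -> lookup (insert p t) q = (q == p) || lookup t q.
Proof.
elim: p t q => [|b p IH] t [|x q] //= [Hs].
case: t => [[]|l r] /=.
- by rewrite orbT.
- case: b; case: x => /=; rewrite ?IH ?orbF ?eqseq_cons //=; by case: t {IH} => // [[]].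
- case: b; case: x => /=; rewrite ?IH ?eqseq_cons //=.
Qed.
Lemma bits_eq c d : (bits c == bits d) = (c == d).
Proof.
case: c d => [[a0 a1 a2 a3 a4] [a5 a6 a7 a8 a9]] [[b0 b1 b2 b3 b4] [b5 b6 b7 b8 b9]].
apply/eqP/eqP => [[-> -> -> -> -> -> -> -> -> ->] //| [-> -> -> -> -> -> -> -> -> ->] //].
Qed.
Lemma size_bits c : size (bits c) = 10.
Proof. by case: c => [[? ? ? ? ?] [? ? ? ? ?]]. Qed.
Lemma lookup_mask s y : lookup (mask s) (bits y) = (y \in s).
Proof.
elim: s => [//|c s IH] /=; rewrite lookup_insert ?size_bits // bits_eq IH in_cons //.
Qed.

Definition Pe i := memc e0 (spanc (mk i)).
Lemma chkCov_ok : let SEm := [seq mask (spanc (mk i)) | i <- filterI Pe] in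
  all (fun x => full (foldr tor (Leaf false) [seq t <- SEm | lookup t (bits x)])) allcodes.
Proof. by vm_compute. Qed.

Lemma cov_e x y : exists2 i, valid i &
  [/\ e0 \in spanc (mk i), x \in spanc (mk i) & y \in spanc (mk i)].
Proof.
move/allP: chkCov_ok => /(_ x (mem_allcodes x)) /(lookup_full (bits y)).
rewrite lookup_foldr filter_map has_map => /hasP[i].
rewrite mem_filter => /andP[/= Hx Hi] /= Hy.
case/andP: (filterIP Hi) => Vi Pi; exists i => //.
by split; [rewrite -memcE | rewrite -lookup_mask | rewrite -lookup_mask].
Qed.

Definition lg5 (x : h5) := find (fun k => h5eqb (pw k) x) (iota 0 31).
Definition av (v : code) := mul5 v.2 (pw (31 - lg5 v.1)).
Definition tv (v : code) (c : code) := iter (31 - lg5 v.1) Dc (shs (av v) c).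
Definition uv (v : code) (c : code) := shs (av v) (iter (lg5 v.1) Dc c).

Lemma chkT_ok : all (fun v => if h5eqb v.1 z5 then true else codeeq (tv v v) e0) allcodes.
Proof. by vm_compute. Qed.
Lemma chk31_ok : all (fun c => codeeq (iter 31 Dc c) c) allcodes.
Proof. by vm_compute. Qed.
Lemma chkY_ok : all (fun y => memc (z5, y) (spanc (mk IY))) allh5.
Proof. by vm_compute. Qed.

Lemma shsK a c : shs a (shs a c) = c.
Proof. by case: c => x y; rewrite /shs /= -x5A x5K x5C x50. Qed.

Lemma uvK v c : uv v (tv v c) = c.
Proof.
rewrite /uv /tv -iterD subnKC; last by rewrite /lg5 -[31]/(size (iota 0 31)) find_size.
move/allP: chk31_ok => /(_ (shs (av v) c) (mem_allcodes _)); rewrite codeeqE => /eqP->.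
exact: shsK.
Qed.

Lemma tvv v : v.1 != z5 -> tv v v = e0.
Proof.
move=> Hv; move/allP: chkT_ok => /(_ v (mem_allcodes v)).
by rewrite h5eqbE (negbTE Hv) codeeqE => /eqP.
Qed.

Lemma Pinv_uv v : Pinv (uv v).
Proof. exact: (Pinv_comp (Pinv_shs _) (Pinv_iter _ Pinv_D)). Qed.

Lemma core v a b : v.1 != z5 -> exists2 i, valid i &
  [/\ v \in spanc (mk i), a \in spanc (mk i) & b \in spanc (mk i)].
Proof.
move=> Hv; have [i Vi [He Ha Hb]] := cov_e (tv v a) (tv v b).
have [i' Vi' H] := Pinv_uv v Vi; exists i' => //.
split.
- by rewrite -(uvK v v); apply: H; rewrite tvv.
- by rewrite -(uvK v a); apply: H.
- by rewrite -(uvK v b); apply: H.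
Qed.

Lemma code_cover c1 c2 c3 : exists2 i, valid i &
  [/\ c1 \in spanc (mk i), c2 \in spanc (mk i) & c3 \in spanc (mk i)].
Proof.
have [H1|H1] := eqVneq c1.1 z5; last exact: core.
have [H2|H2] := eqVneq c2.1 z5.
  have [H3|H3] := eqVneq c3.1 z5.
    exists IY => //.
    have HY : forall c, c.1 = z5 -> c \in spanc (mk IY).
      move=> [x y] /= ->; move/allP: chkY_ok => /(_ y (mem_allh5 y)).
      by rewrite memcE.
    by split; apply: HY.
  by have [i Vi [? ? ?]] := core c1 c2 H3; exists i.
by have [i Vi [? ? ?]] := core c1 c3 H2; exists i.
Qed.

Definition idxsM := [seq IM a bc.1 bc.2 | a <- allh5, bc <- [seq (b, c) | b <- allh5, c <- allh5]].
Definition Q4 := [seq (k, r) | k <- iota 0 31,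
   r <- [seq (pl, h) | pl <- iota 0 5, h <- [seq (hp, hq) | hp <- iota 0 4, hq <- iota 0 4]]].
Definition idxsF := [seq IF j x.1 x.2.1 x.2.2.1 x.2.2.2 | j <- iota 0 5, x <- Q4].
Definition idxs := idxsM ++ idxsF ++ [:: IY].

Lemma size_fc (S R : Type) (g : S -> seq R) s n :
  (forall x, size (g x) = n) -> size (flatten (map g s)) = (size s * n)%N.
Proof. by move=> H; elim: s => [//|x s IH] /=; rewrite size_cat IH H mulSn. Qed.

Lemma size_idxs : size idxs = 45169.
Proof.
have sM : size idxsM = (32 * (32 * 32))%N by rewrite /idxsM (@size_fc _ _ _ _ (32 * 32)).
have sQ : size Q4 = (31 * (5 * (4 * 4)))%N by rewrite /Q4 (@size_fc _ _ _ _ (5 * (4 * 4))).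
have sF : size idxsF = (5 * (31 * (5 * (4 * 4))))%N.
  by rewrite /idxsF (@size_fc _ _ _ _ (31 * (5 * (4 * 4)))) // => j /=; rewrite size_map sQ.
by rewrite /idxs size_cat sM size_cat sF.
Qed.

Lemma valid_idxs i : valid i -> i \in idxs.
Proof.
rewrite /idxs; case: i => [a b c|j k pl hp hq|].
- move=> _; rewrite mem_cat; apply/orP; left.
  apply: (allpairs_f (fun a bc => IM a bc.1 bc.2) (x := a) (y := (b, c))); first exact: mem_allh5.
  by apply: allpairs_f; apply: mem_allh5.
- case/and5P=> Hj Hk Hpl Hhp Hhq; rewrite mem_cat; apply/orP; right.
  rewrite mem_cat; apply/orP; left.
  have mi : forall m n, m < n -> m \in iota 0 n by move=> m n H; rewrite mem_iota.
  apply: (allpairs_f (fun j x => IF j x.1 x.2.1 x.2.2.1 x.2.2.2) (x := j) (y := (k, (pl, (hp, hq))))).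
    exact: mi.
  apply: allpairs_f; first exact: mi.
  apply: allpairs_f; first exact: mi.
  by apply: allpairs_f; apply: mi.
- move=> _; rewrite mem_cat; apply/orP; right; by rewrite mem_cat mem_head orbT.
Qed.

Lemma size_mk i : size (mk i) = 5.
Proof.
case: i => // j k pl hp hq; rewrite /mk.
case: (nth _ repdata j) => p q.
by case: (nth _ _ pl) => [[[[b1 b2] b3] r1] r2].
Qed.

Section Vec.
Import GRing.Theory.
Local Open Scope ring_scope.

Definition dec (c : code) : 'rV['F_2]_10 := \row_(i < 10) ((nth false (bits c) i)%:R).

Lemma bits_xor c d i : nth false (bits (xorc c d)) i = xorb (nth false (bits c) i) (nth false (bits d) i).
Proof.
case: c d => [[? ? ? ? ?] [? ? ? ? ?]] [[? ? ? ? ?] [? ? ? ? ?]].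
case: i => [|[|[|[|[|[|[|[|[|[|i]]]]]]]]]]; try reflexivity.
by rewrite /= !nth_nil.
Qed.

Lemma F2b (a b : bool) : (xorb a b)%:R = a%:R + b%:R :> 'F_2.
Proof. case: a; case: b => /=; rewrite ?addr0 ?add0r //; by apply/val_inj. Qed.

Lemma F2E (z : 'F_2) : (z != 0)%:R = z.
Proof. case: z => [[|[|m]] Hm]; by apply/val_inj. Qed.

Lemma dec_xor c d : dec (xorc c d) = dec c + dec d.
Proof. by apply/rowP => i; rewrite !mxE bits_xor F2b. Qed.

Lemma dec_zc : dec zc = 0.
Proof.
apply/rowP => i; rewrite !mxE.
by rewrite (_ : bits zc = nseq 10 false) // nth_nseq if_same.
Qed.

Lemma dec_span s c : c \in spanc s -> dec c \in <<map dec s>>%VS.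
Proof.
elim: s c => [|a s IH] c /=.
  by rewrite inE => /eqP->; rewrite dec_zc mem0v.
rewrite span_cons mem_cat => /orP[/IH H|/mapP[d Hd ->]].
  exact: (subvP (addvSr _ _) _ H).
by rewrite dec_xor; apply: memv_add; [apply: memv_line | apply: IH].
Qed.

Definition enc (v : 'rV['F_2]_10) : code :=
  (H5 (v 0 (inord 0) != 0) (v 0 (inord 1) != 0) (v 0 (inord 2) != 0) (v 0 (inord 3) != 0) (v 0 (inord 4) != 0),
   H5 (v 0 (inord 5) != 0) (v 0 (inord 6) != 0) (v 0 (inord 7) != 0) (v 0 (inord 8) != 0) (v 0 (inord 9) != 0)).

Lemma decK v : dec (enc v) = v.
Proof.
apply/rowP => i; rewrite mxE -[RHS]F2E; congr (_%:R).
case: i => [[|[|[|[|[|[|[|[|[|[|i]]]]]]]]]] Hi] //=;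
  by congr (v 0 _ != 0); apply/val_inj; rewrite /= inordK.
Qed.

Lemma ext_ex (X : {vspace 'rV['F_2]_10}) : exists Y : {vspace 'rV['F_2]_10},
  (\dim X <= 5)%N ==> ((X <= Y)%VS && (\dim Y == 5)%N).
Proof.
case: (leqP (\dim X) 5) => [H|H]; last by exists X; rewrite ?leqNgt ?H.
suff: forall m (X : {vspace 'rV['F_2]_10}), (\dim X + m = 5)%N ->
    exists Y : {vspace 'rV['F_2]_10}, (X <= Y)%VS && (\dim Y == 5)%N.
  by move/(_ (5 - \dim X)%N X); rewrite subnKC // => /(_ erefl) [Y HY]; exists Y; rewrite /= HY.
elim=> [|m IH] {H}X HX.
  by exists X; rewrite subvv; move: HX; rewrite addn0 => ->.
have HfX : ~~ (fullv <= X)%VS.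
  apply/negP => /dimvS; rewrite dimvf /dim /= => H10.
  have : (\dim X <= 5)%N by apply: (leq_trans (leq_addr m.+1 _)); rewrite HX.
  by move=> /(leq_trans H10).
have [v _ vX] := subvPn HfX.
set X' := (X + <[v]>)%VS.
have sXX' : (X <= X')%VS by apply: addvSl.
have vX' : v \in X' by apply: (subvP (addvSr _ _)); apply: memv_line.
have le1 : (\dim X' <= \dim X + 1)%N.
  apply: leq_trans (dimv_add_leqif X <[v]>).1 _; rewrite leq_add2l dim_vline; by case: (v != 0).
have lt1 : (\dim X < \dim X')%N.
  have L := dimv_leqif_sup sXX'; rewrite ltn_neqAle L.1 andbT.
  rewrite L.2; apply/negP => /subvP /(_ v vX'); by rewrite (negbTE vX).
have dX' : \dim X' = (\dim X + 1)%N by apply/eqP; rewrite eqn_leq le1 addn1 lt1.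
have HX' : (\dim X' + m = 5)%N by rewrite dX' -addnA add1n.
have [Y /andP[sX'Y dY]] := IH X' HX'.
by exists Y; rewrite dY (subv_trans sXX' sX'Y).
Qed.

Definition ext5 (X : {vspace 'rV['F_2]_10}) := xchoose (ext_ex X).

Lemma ext5P X : (\dim X <= 5)%N -> (X <= ext5 X)%VS /\ \dim (ext5 X) = 5%N.
Proof.
move=> H; rewrite /ext5; move: (xchooseP (ext_ex X)) => /implyP /(_ H) /andP[A /eqP B].
by split.
Qed.

Definition Sfam := [seq ext5 <<map dec (mk i)>>%VS | i <- idxs].

Lemma dim_mk i : (\dim <<map dec (mk i)>>%VS <= 5)%N.
Proof. by rewrite (leq_trans (dim_span _)) // size_map size_mk. Qed.

End Vec.

Theorem mainTheorem15 : covering_number_le 'F_2 10 5 3 45230.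
Proof.
exists Sfam; split; last by rewrite size_map size_idxs.
split.
  by move=> U /mapP[i _ ->]; case: (ext5P (dim_mk i)).
move=> W dW.
have sz : size (vbasis W) = 3 by rewrite size_tuple dW.
case E : (tval (vbasis W)) sz => [|w1 [|w2 [|w3 [|]]]] // _.
have [i Vi [H1 H2 H3]] := code_cover (enc w1) (enc w2) (enc w3).
exists (ext5 <<map dec (mk i)>>%VS); first by apply: (map_f (fun i => ext5 <<map dec (mk i)>>%VS)); apply: valid_idxs.
apply: subv_trans (ext5P (dim_mk i)).1.
rewrite -(span_basis (vbasisP W)); apply/span_subvP => w.
rewrite -[w \in _]/(w \in tval (vbasis W)) E !inE => /or3P[] /eqP->.
- by rewrite -(decK w1); apply: dec_span.
- by rewrite -(decK w2); apply: dec_span.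
- by rewrite -(decK w3); apply: dec_span.
Qed.
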